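(* Let $\partial:L_1\to L_0$ be a crossed module of Lie algebras. (i) For each $c\in L_1$, $(\partial(c),\xi_c)\in\mathbf Z_0(L_* )$, where $\xi_c(t)=-t\cdot c$. (ii) The linear map $\delta:L_1\to\mathbf Z_0(L_* )$, $\delta(c)=(\partial(c),\xi_c)$, together with the bilinear map $\mathbf Z_0(L_* )\times\mathbf Z_0(L_* )\to L_1$, $\{(x,\xi),(y,\eta)\}:=\xi(y)$, satisfies, for all $a\in L_1$, $u,v,w\in\mathbf Z_0(L_* )$: $\{\delta a,u\}+\{u,\delta a\}=0$, $\delta\{u,u\}=0$ and $\{u,\delta\{v,w\}\}+\{w,\delta\{u,v\}\}+\{v,\delta\{w,u\}\}=0$; hence (with $[u,v]:=\delta\{u,v\}$ on $\mathbf Z_0(L_* )$ and $[a,b]:=\{\delta a,\delta b\}$ on $L_1$) it is a braided crossed module of Lie algebras, called the centre $\mathbf Z_*(L_* )$ of $L_*$.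
   Context: All vector spaces over a field $k$ of characteristic $\neq2$. A crossed module of Lie algebras is a Lie algebra homomorphism $\partial:L_1\to L_0$ with an action $(x,a)\mapsto x\cdot a$ of $L_0$ on the Lie algebra $L_1$ (i.e. $[x,y]\cdot a=x\cdot(y\cdot a)-y\cdot(x\cdot a)$, $x\cdot[a,b]=[x\cdot a,b]+[a,x\cdot b]$) such that $\partial(x\cdot a)=[x,\partial a]$ and $\partial(a)\cdot b=[a,b]$. $\mathbf Z_0(L_* )$ is the vector space (under componentwise operations) of pairs $(x,\xi)$ with $x\in L_0$ and $\xi:L_0\to L_1$ a linear map such that for all $s,t\in L_0$, $a\in L_1$: $\partial\xi(t)=[x,t]$; $\xi(\partial a)=x\cdot a$; $\xi([s,t])=s\cdot\xi(t)-t\cdot\xi(s)$. A braided crossed module of Lie algebras is a Lie algebra homomorphism $\partial:M_1\to M_0$ with a bilinear map $\{-,-\}:M_0\times M_0\to M_1$ such that $\partial\{x,y\}=[x,y]$, $\{\partial a,\partial b\}=[a,b]$, $\{\partial a,x\}+\{x,\partial a\}=0$, $\{x,[y,z]\}+\{z,[x,y]\}+\{y,[z,x]\}=0$. *)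

(* Defs.v *)
From HB Require Import structures.
From mathcomp Require Import all_boot all_algebra.
From mathcomp Require Import functions.
Set Implicit Arguments. Unset Strict Implicit. Unset Printing Implicit Defensive.
Import GRing.Theory.
Local Open Scope ring_scope.

Definition lin (k : fieldType) (U V : lmodType k) (f : U -> V) : Prop :=
  forall (a : k) (x y : U), f (a *: x + y) = a *: f x + f y.

Definition subspace (k : fieldType) (V : lmodType k) (S : V -> Prop) : Prop :=
  S 0 /\ forall (a : k) x y, S x -> S y -> S (a *: x + y).

Definition bilinear_on (k : fieldType) (V W : lmodType k) (S : V -> Prop)
  (b : V -> V -> W) : Prop :=
  (forall (a : k) x y z, S x -> S y -> S z ->
      b (a *: x + y) z = a *: b x z + b y z) /\
  (forall (a : k) x y z, S x -> S y -> S z ->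
      b z (a *: x + y) = a *: b z x + b z y).

Definition lie_on (k : fieldType) (V : lmodType k) (S : V -> Prop)
  (br : V -> V -> V) : Prop :=
  [/\ subspace S,
      (forall x y, S x -> S y -> S (br x y)),
      bilinear_on S br,
      (forall x, S x -> br x x = 0) &
      (forall x y z, S x -> S y -> S z ->
          br x (br y z) + br y (br z x) + br z (br x y) = 0)].

Definition lie_alg (k : fieldType) (V : lmodType k) (br : V -> V -> V) : Prop :=
  lie_on (fun _ => True) br.

Definition crossed_module (k : fieldType) (L1 L0 : lmodType k)
  (br1 : L1 -> L1 -> L1) (br0 : L0 -> L0 -> L0)
  (d : L1 -> L0) (act : L0 -> L1 -> L1) : Prop :=
  [/\ lie_alg br1 /\ lie_alg br0,
      lin d /\ (forall a b, d (br1 a b) = br0 (d a) (d b)),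
      (forall (a : k) x y z, act (a *: x + y) z = a *: act x z + act y z)
        /\ (forall (a : k) x y z, act z (a *: x + y) = a *: act z x + act z y),
      (forall x y a, act (br0 x y) a = act x (act y a) - act y (act x a))
        /\ (forall x a b, act x (br1 a b) = br1 (act x a) b + br1 a (act x b)) &
      (forall x a, d (act x a) = br0 x (d a))
        /\ (forall a b, act (d a) b = br1 a b)].

Definition Z0 (k : fieldType) (L1 L0 : lmodType k)
  (br0 : L0 -> L0 -> L0) (d : L1 -> L0) (act : L0 -> L1 -> L1)
  (u : (L0 * (L0 -> L1))%type) : Prop :=
  [/\ lin u.2,
      (forall t, d (u.2 t) = br0 u.1 t),
      (forall a, u.2 (d a) = act u.1 a) &
      (forall s t, u.2 (br0 s t) = act s (u.2 t) - act t (u.2 s))].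

Definition zdelta (k : fieldType) (L1 L0 : lmodType k)
  (d : L1 -> L0) (act : L0 -> L1 -> L1) (c : L1) : (L0 * (L0 -> L1))%type :=
  (d c, fun t => - act t c).

Definition zbraid (k : fieldType) (L1 L0 : lmodType k)
  (u v : (L0 * (L0 -> L1))%type) : L1 := u.2 v.1.

Definition braided_xmod_on (k : fieldType) (M1 M0 : lmodType k)
  (S0 : M0 -> Prop) (br1 : M1 -> M1 -> M1) (br0 : M0 -> M0 -> M0)
  (d : M1 -> M0) (bb : M0 -> M0 -> M1) : Prop :=
  [/\ lie_alg br1, lie_on S0 br0,
      [/\ (forall a, S0 (d a)), lin d & (forall a b, d (br1 a b) = br0 (d a) (d b))],
      bilinear_on S0 bb &
      [/\ (forall x y, S0 x -> S0 y -> d (bb x y) = br0 x y),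
          (forall a b, bb (d a) (d b) = br1 a b),
          (forall a x, S0 x -> bb (d a) x + bb x (d a) = 0) &
          (forall x y z, S0 x -> S0 y -> S0 z ->
              bb x (br0 y z) + bb z (br0 x y) + bb y (br0 z x) = 0)]].

(* Main.v *)
Require Import Defs.
From HB Require Import structures.
From mathcomp Require Import all_boot all_algebra.
From mathcomp Require Import functions boolp.
Import GRing.Theory.
Local Open Scope ring_scope.

Set Implicit Arguments.
Section Helpers.
Variables (k : fieldType) (U V : lmodType k) (f : U -> V).
Hypothesis hf : lin f.
Lemma lin0 : f 0 = 0.
Proof.
have E := hf 1 0 0; rewrite scaler0 addr0 scale1r in E.
have H : f 0 + f 0 = f 0 + 0 by rewrite addr0 -E.
exact: addrI H.
Qed.
Lemma linD x y : f (x + y) = f x + f y.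
Proof. by have := hf 1 x y; rewrite !scale1r. Qed.
Lemma linZ a x : f (a *: x) = a *: f x.
Proof. by have := hf a x 0; rewrite !addr0 lin0 addr0. Qed.
Lemma linN x : f (- x) = - f x.
Proof. by rewrite -scaleN1r linZ scaleN1r. Qed.
Lemma linB x y : f (x - y) = f x - f y.
Proof. by rewrite linD linN. Qed.
End Helpers.

Lemma lie_antisym (k : fieldType) (V : lmodType k) (br : V -> V -> V) :
  lie_alg br -> forall x y, br x y = - br y x.
Proof.
case=> _ _ [bl br'] alt _ x y.
have hl z : lin (br ^~ z) by move=> a u v; exact: bl.
have hr z : lin (br z) by move=> a u v; exact: br'.
have := alt (x + y) I.
rewrite (linD (hl _)) !(linD (hr _)) alt // alt // add0r addr0.
by move/eqP; rewrite addr_eq0 => /eqP.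
Qed.

Theorem theorem4p3 (k : fieldType) (hk : (2%:R : k) != 0)
  (L1 L0 : lmodType k) (br1 : L1 -> L1 -> L1) (br0 : L0 -> L0 -> L0)
  (d : L1 -> L0) (act : L0 -> L1 -> L1) :
  crossed_module br1 br0 d act ->
  let Z := Z0 br0 d act in
  let delta := zdelta d act in
  let bb := @zbraid k L1 L0 in
  (forall c : L1, Z (delta c)) /\
  (forall a u, Z u -> bb (delta a) u + bb u (delta a) = 0) /\
  (forall u, Z u -> delta (bb u u) = 0) /\
  (forall u v w, Z u -> Z v -> Z w ->
     bb u (delta (bb v w)) + bb w (delta (bb u v)) + bb v (delta (bb w u)) = 0) /\
  braided_xmod_on Z (fun a b => bb (delta a) (delta b))
                    (fun u v => delta (bb u v)) delta bb.
Proof.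
case=> [[Lie1 Lie0] [ld dbr] [actl actr] [actbr actder] [dact peif]] Z delta bb.
have anti0 := lie_antisym Lie0.
have anti1 := lie_antisym Lie1.
have Lie0' := Lie0; case: Lie0' => _ _ [bl0 br0'] alt0 jac0.
have hl0 z : lin (br0 ^~ z) by move=> a u v; exact: bl0.
have hr0 z : lin (br0 z) by move=> a u v; exact: br0'.
have hal z : lin (act ^~ z) by move=> a u v; exact: actl.
have har z : lin (act z) by move=> a u v; exact: actr.
have ZD : forall c, Z (delta c).
  move=> c; split => /=.
  - by move=> a x y; rewrite (linD (hal _)) (linZ (hal _)) opprD scalerN.
  - by move=> t; rewrite (linN ld) dact anti0 opprK.
  - by move=> a; rewrite peif anti1 opprK.
  - move=> s t; rewrite actbr !(linN (har _)) opprB.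
    by rewrite opprK addrC.
have kill : forall u t, Z u -> act t (u.2 u.1) = 0.
  move=> u t [ul ud uda ubr].
  have := ubr u.1 t; rewrite -uda ud => /eqP.
  by rewrite -subr_eq0 opprB addrC subrK => /eqP.
have jac : forall u v w, Z u -> Z v -> Z w ->
   u.2 (d (v.2 w.1)) + w.2 (d (u.2 v.1)) + v.2 (d (w.2 u.1)) = 0.
  move=> u v w [ul ud uda ubr] [vl vd vda vbr] [wl wd wda wbr].
  have eA : u.2 (d (v.2 w.1)) = v.2 (br0 u.1 w.1) - w.2 (br0 u.1 v.1).
    by rewrite vd ubr -vda -wda !ud.
  have eC : v.2 (d (w.2 u.1)) = - v.2 (br0 u.1 w.1).
    by rewrite wd anti0 (linN vl).
  by rewrite eA ud eC subrK subrr.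
have dlin : lin delta.
  move=> a x y; rewrite /delta /zdelta /=; congr pair.
    exact: ld.
  apply: funext => t /=.
  by rewrite (actr a x y t) opprD scalerN.
have bbswap : forall a u, Z u -> bb (delta a) u + bb u (delta a) = 0.
  by move=> a u [ul ud uda ubr]; rewrite /bb /zbraid /= uda addNr.
have dbbuu : forall u, Z u -> delta (bb u u) = 0.
  move=> u Zu; rewrite /delta /zdelta /bb /zbraid.
  case: (Zu) => ul ud _ _.
  rewrite ud alt0 //; congr pair; apply: funext => t /=.
  by rewrite kill // oppr0.
have jacZ : forall u v w, Z u -> Z v -> Z w ->
     bb u (delta (bb v w)) + bb w (delta (bb u v)) + bb v (delta (bb w u)) = 0.
  by move=> u v w Zu Zv Zw; exact: jac.
have subZ : subspace Z.
  split.
    split => /=.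
    - by move=> a x y; rewrite scaler0 addr0.
    - by move=> t; rewrite (lin0 ld) (lin0 (hl0 _)).
    - by move=> a; rewrite (lin0 (hal _)).
    - by move=> s t; rewrite (lin0 (har _)) (lin0 (har _)) subrr.
  move=> a x y [xl xd xda xbr] [yl yd yda ybr].
  have -> : a *: x + y = (a *: x.1 + y.1, fun t => a *: x.2 t + y.2 t) by [].
  split => /=.
  - move=> b s t; rewrite xl yl !scalerDr !scalerA mulrC addrACA.
    by rewrite -scalerA.
  - by move=> t; rewrite (linD ld) (linZ ld) xd yd bl0.
  - by move=> b; rewrite xda yda actl.
  - move=> s t; rewrite xbr ybr !(linD (har _)) !(linZ (har _)).
    by rewrite scalerBr opprD addrACA.
have deltaD x y : delta (x + y) = delta x + delta y.
  exact: linD dlin x y.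
have delta0 : delta 0 = 0 := lin0 dlin.
do 4 (split; first by []).
split.
- have -> : (fun a b => bb (delta a) (delta b)) = br1.
    apply: funext => a; apply: funext => b.
    by rewrite /bb /zbraid /= peif anti1 opprK.
  exact: Lie1.
- split.
  + exact: subZ.
  + by move=> x y _ _; exact: ZD.
  + split.
    * move=> a x y z Zx Zy Zz; rewrite /bb /zbraid -dlin; congr (delta _).
    * move=> a x y z Zx Zy Zz; rewrite /bb /zbraid -dlin; congr (delta _).
      by case: Zz => zl _ _ _; rewrite /= zl.
  + by move=> x Zx; exact: dbbuu.
  + move=> x y z Zx Zy Zz.
    rewrite -!deltaD -delta0; congr (delta _).
    by rewrite -addrA [X in _ + X]addrC addrA; exact: jacZ.
- by split.
- split.
  + move=> a x y z Zx Zy Zz; rewrite /bb /zbraid //.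
  + move=> a x y z Zx Zy Zz; rewrite /bb /zbraid /=.
    by case: Zz => zl _ _ _; rewrite zl.
- by split.
Qed.
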